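(* Let $\Gamma=(V,E)$ be a finite graph, $\{G_v\}_{v\in V}$ a collection of non-trivial finitely generated abelian groups, and $G=W(\Gamma,\{G_v\}_{v\in V})$ their graph product. Assume that every vertex $v$ with $st(v)=V$ has finite vertex group $G_v$. Then $[\mathrm{Aut}(G),G]$ is a subgroup of finite index in $G$. Moreover, if no vertex $v\in V$ satisfies $st(v)=V$ and every vertex group $G_v$ is finite of odd order (i.e. no element of any vertex group has infinite order or order a power of $2$ other than $1$), then $[\mathrm{Aut}(G),G]=G$.
   Context: Graph: $\Gamma=(V,E)$, $V$ non-empty finite, $E$ a set of 2-element subsets; $lk(v)=\{x:\{v,x\}\in E\}$, $st(v)=lk(v)\cup\{v\}$. Graph product: $(\ast_{v}G_v)/N$ with $N$ normally generated by $[G_x,G_y]$, $\{x,y\}\in E$. $[\mathrm{Aut}(G),G]$ denotes the subgroup of $G$ generated by all elements $\varphi(g)g^{-1}$ with $\varphi\in\mathrm{Aut}(G)$, $g\in G$ (this corresponds to the commutators $[\varphi,c_g]=c_{\varphi(g)g^{-1}}$ in $\mathrm{Aut}(G)$, where $c_g$ is conjugation by $g$). *)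

(* Defs.v *)
From mathcomp Require Import all_boot.
From Stdlib Require Import List.

Set Implicit Arguments.
Unset Strict Implicit.
Unset Printing Implicit Defensive.

Record AGroup := {
  carrier :> Type;
  gmul : carrier -> carrier -> carrier;
  ginv : carrier -> carrier;
  gone : carrier;
  gmulA : forall x y z, gmul x (gmul y z) = gmul (gmul x y) z;
  gmul1 : forall x, gmul gone x = x;
  gmulV : forall x, gmul (ginv x) x = gone
}.

Arguments gmul {G} : rename.
Arguments ginv {G} : rename.
Arguments gone {G} : rename.

Definition is_hom (G H : AGroup) (f : G -> H) : Prop :=
  forall x y : G, f (gmul x y) = gmul (f x) (f y).

Definition is_aut (G : AGroup) (f : G -> G) : Prop :=
  is_hom f /\ exists g : G -> G, (forall x, g (f x) = x) /\ (forall x, f (g x) = x).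

Definition generated (G : AGroup) (S : G -> Prop) : G -> Prop :=
  fun g => exists l : list (bool * G),
    List.Forall (fun p => S (snd p)) l /\
    g = List.fold_right
          (fun p acc => gmul (if fst p then snd p else ginv (snd p)) acc) gone l.

Definition aut_comm (G : AGroup) : G -> Prop :=
  generated (fun x : G => exists (phi : G -> G) (g : G),
                 is_aut phi /\ x = gmul (phi g) (ginv g)).

Definition finite_index (G : AGroup) (K : G -> Prop) : Prop :=
  exists reps : list G, forall g : G, exists r, List.In r reps /\ K (gmul (ginv r) g).

Definition abelian_group (G : AGroup) : Prop := forall x y : G, gmul x y = gmul y x.

Definition finitely_generated (G : AGroup) : Prop :=
  exists l : list G, forall g : G, generated (fun x => List.In x l) g.

Definition nontrivial_group (G : AGroup) : Prop := exists x : G, x <> gone.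

Definition finite_group (G : AGroup) : Prop :=
  exists l : list G, forall x : G, List.In x l.

Definition odd_order_group (G : AGroup) : Prop :=
  exists l : list G, List.NoDup l /\ (forall x : G, List.In x l) /\ Nat.odd (length l).

(* Simple graph on a finite vertex type: e symmetric, irreflexive.
   st(v) = V  iff every vertex is v or adjacent to v. *)
Definition star_is_all (V : finType) (e : rel V) (v : V) : Prop :=
  forall w : V, w = v \/ e v w.

(* G with maps iota_v : G_v -> G is the graph product W(Gamma, {G_v}):
   characterized (up to isomorphism) by the universal property of the
   quotient (free product of the G_v) / << [G_x, G_y] : {x,y} in E >>. *)
Definition is_graph_product (V : finType) (e : rel V) (Gv : V -> AGroup)
    (G : AGroup) (iota : forall v, Gv v -> G) : Prop :=
  (forall v, is_hom (iota v)) /\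
  (forall v w, e v w -> forall (x : Gv v) (y : Gv w),
       gmul (iota v x) (iota w y) = gmul (iota w y) (iota v x)) /\
  (forall (H : AGroup) (f : forall v, Gv v -> H),
      (forall v, is_hom (f v)) ->
      (forall v w, e v w -> forall (x : Gv v) (y : Gv w),
           gmul (f v x) (f w y) = gmul (f w y) (f v x)) ->
      exists phi : G -> H,
        (is_hom phi /\ forall v (x : Gv v), phi (iota v x) = f v x) /\
        (forall psi : G -> H, is_hom psi -> (forall v (x : Gv v), psi (iota v x) = f v x) ->
           forall g, psi g = phi g)).
Arguments is_graph_product {V} e Gv G iota.
Arguments aut_comm G : clear implicits.
Arguments finite_index {G} K.
Arguments star_is_all {V} e v.

(* Main.v *)
Require Import Defs.
From Stdlib Require Import List ProofIrrelevance.
From Stdlib Require PeanoNat Permutation.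
From Stdlib Require Import Lia.
From mathcomp Require Import all_boot.
From mathcomp Require Import zify.

Local Notation "x ⋅ y" := (gmul x y) (at level 40, left associativity).

Section Basics.
Variable G : AGroup.
Implicit Types x y z : G.

Lemma mulgV x : x ⋅ ginv x = gone.
Proof.
  rewrite -[x ⋅ ginv x]gmul1 -[in X in X ⋅ (x ⋅ _)](gmulV (ginv x)).
  by rewrite -gmulA [ginv x ⋅ (x ⋅ ginv x)]gmulA gmulV gmul1 gmulV.
Qed.

Lemma mulg1 x : x ⋅ gone = x.
Proof. by rewrite -(gmulV x) gmulA mulgV gmul1. Qed.

Lemma mulg_canl x y z : x ⋅ y = x ⋅ z -> y = z.
Proof. move=> H. by rewrite -(gmul1 y) -(gmulV x) -gmulA H gmulA gmulV gmul1. Qed.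

Lemma inv_uniq x y : x ⋅ y = gone -> x = ginv y.
Proof. move=> H. by rewrite -(mulg1 x) -(mulgV y) gmulA H gmul1. Qed.

Lemma invgK x : ginv (ginv x) = x.
Proof. symmetry; apply: inv_uniq; exact: mulgV. Qed.

Lemma invgM x y : ginv (x ⋅ y) = ginv y ⋅ ginv x.
Proof.
  symmetry; apply: inv_uniq.
  by rewrite -gmulA [ginv x ⋅ (x ⋅ y)]gmulA gmulV gmul1 gmulV.
Qed.

Lemma inv1 : ginv (@gone G) = gone.
Proof. symmetry; apply: inv_uniq; exact: gmul1. Qed.

Lemma mulKg x y : ginv x ⋅ (x ⋅ y) = y.
Proof. by rewrite gmulA gmulV gmul1. Qed.
Lemma mulKVg x y : x ⋅ (ginv x ⋅ y) = y.
Proof. by rewrite gmulA mulgV gmul1. Qed.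
Lemma mulgK x y : x ⋅ y ⋅ ginv y = x.
Proof. by rewrite -gmulA mulgV mulg1. Qed.
Lemma mulgKV x y : x ⋅ ginv y ⋅ y = x.
Proof. by rewrite -gmulA gmulV mulg1. Qed.

Definition wf (l : list (bool * G)) :=
  fold_right (fun p acc => gmul (if fst p then snd p else ginv (snd p)) acc) gone l.

Lemma gen_ind (S : G -> Prop) (P : G -> Prop) :
  P gone -> (forall s x, S s -> P x -> P (s ⋅ x)) ->
  (forall s x, S s -> P x -> P (ginv s ⋅ x)) ->
  forall g, generated S g -> P g.
Proof.
  move=> H1 H2 H3 g [l [Hl ->]].
  elim: l Hl => [|[[] s] l IH] Hl //=; inversion Hl; subst; simpl in *; auto.
Qed.

Lemma gen1 (S : G -> Prop) : generated S gone.
Proof. by exists nil. Qed.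

Lemma genS (S : G -> Prop) x : S x -> generated S x.
Proof. move=> H; exists ((true, x) :: nil); split; [by constructor | by rewrite /= mulg1]. Qed.

Lemma genV' (S : G -> Prop) x : S x -> generated S (ginv x).
Proof. move=> H; exists ((false, x) :: nil); split; [by constructor | by rewrite /= mulg1]. Qed.

Lemma genM (S : G -> Prop) x y : generated S x -> generated S y -> generated S (x ⋅ y).
Proof.
  move=> Hx Hy. move: x Hx. apply: gen_ind.
  - by rewrite gmul1.
  - move=> s x Hs [l [Hl E]]. exists ((true, s) :: l); split; first by constructor.
    by rewrite /= -E gmulA.
  - move=> s x Hs [l [Hl E]]. exists ((false, s) :: l); split; first by constructor.
    by rewrite /= -E gmulA.
Qed.

Lemma genV (S : G -> Prop) x : generated S x -> generated S (ginv x).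
Proof.
  move: x; apply: gen_ind.
  - rewrite inv1; exact: gen1.
  - move=> s x Hs Hx. rewrite invgM. apply: genM => //. exact: genV'.
  - move=> s x Hs Hx. rewrite invgM invgK. apply: genM => //. exact: genS.
Qed.

Lemma gen_sub (S T : G -> Prop) :
  (forall x, S x -> generated T x) -> forall g, generated S g -> generated T g.
Proof.
  move=> H; apply: gen_ind; first exact: gen1.
  - move=> s x Hs Hx; apply: genM => //; exact: H.
  - move=> s x Hs Hx; apply: genM => //; apply: genV; exact: H.
Qed.

End Basics.
Arguments genM {G S x y}.
Arguments genV {G S x}.
Arguments genS {G S x}.
Arguments genV' {G S x}.
Arguments gen1 {G S}.
Arguments gen_sub {G S T}.

Section Hom.
Variables G H : AGroup.
Variable f : G -> H.
Hypothesis hf : is_hom f.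

Lemma hom1 : f gone = gone.
Proof.
  apply: (@mulg_canl _ (f gone)). by rewrite -hf gmul1 mulg1.
Qed.

Lemma homV x : f (ginv x) = ginv (f x).
Proof. apply: inv_uniq. by rewrite -hf gmulV hom1. Qed.

Lemma hom_gen (S : G -> Prop) x : generated S x ->
  generated (fun y => exists z, S z /\ y = f z) (f x).
Proof.
  move: x; apply: gen_ind.
  - rewrite hom1; exact: gen1.
  - move=> s x Hs Hx; rewrite hf; apply: genM => //; apply: genS; by exists s.
  - move=> s x Hs Hx; rewrite hf homV; apply: genM => //; apply: genV'; by exists s.
Qed.
End Hom.
Arguments homV {G H f} hf x.
Arguments hom_gen {G H f} hf {S x}.
Arguments hom1 {G H f} hf.

Section Reps.
Variable G : AGroup.
Variable R : G -> G -> Prop.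
Hypothesis Rrefl : forall x, R x x.
Hypothesis Rsym : forall {x y}, R x y -> R y x.
Hypothesis Rtrans : forall {x y z}, R x y -> R y z -> R x z.
Hypothesis Rl : forall z {x y}, R x y -> R (z ⋅ x) (z ⋅ y).
Hypothesis Rr : forall z {x y}, R x y -> R (x ⋅ z) (y ⋅ z).
Hypothesis Rc : forall x y, R (x ⋅ y) (y ⋅ x).

Fixpoint reps (L : list G) : list G :=
  match L with nil => gone :: nil | b :: L' => reps L' ++ map (gmul b) (reps L') end.

Lemma reps1 L : In gone (reps L).
Proof. elim: L => [|b L IH] /=; [by left | apply: in_or_app; by left]. Qed.

Lemma reps_key L : (forall b, In b L -> R gone (b ⋅ b)) -> forall a, In a L ->
  forall r, In r (reps L) -> exists r', In r' (reps L) /\ R r' (a ⋅ r).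
Proof.
  elim: L => [|b L IH] Hsq a //= Ha r Hr.
  have HsqL : forall c, In c L -> R gone (c ⋅ c) by move=> c Hc; apply: Hsq; right.
  case: (in_app_or _ _ _ Hr) => {}Hr.
  - case: Ha => [<-|Ha].
    + exists (b ⋅ r); split; last exact: Rrefl. apply: in_or_app; right; exact: in_map.
    + have [r' [H1 H2]] := IH HsqL a Ha r Hr. exists r'; split => //. apply: in_or_app; by left.
  - case/in_map_iff: Hr => r0 [<- Hr0].
    case: Ha => [<-|Ha].
    + exists r0; split; first by apply: in_or_app; left.
      rewrite gmulA. rewrite -{1}(gmul1 r0). apply: Rr. by apply: Hsq; left.
    + have [r' [H1 H2]] := IH HsqL a Ha r0 Hr0. exists (b ⋅ r'); split.
      * apply: in_or_app; right; exact: in_map.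
      * apply: Rtrans (Rl b H2) _. rewrite !gmulA. apply: Rr. exact: Rc.
Qed.

Lemma reps_main L : (forall b, In b L -> R gone (b ⋅ b)) ->
  forall g, generated (fun x => In x L) g -> exists r, In r (reps L) /\ R r g.
Proof.
  move=> Hsq. apply: gen_ind.
  - exists gone; split; [exact: reps1 | exact: Rrefl].
  - move=> s x Hs [r [Hr HR]]. have [r' [H1 H2]] := @reps_key L Hsq s Hs r Hr.
    exists r'; split => //. apply: Rtrans H2 _. exact: Rl.
  - move=> s x Hs [r [Hr HR]]. have [r' [H1 H2]] := @reps_key L Hsq s Hs r Hr.
    exists r'; split => //. apply: Rtrans H2 _. apply: Rtrans (Rl s HR) _.
    apply: Rr. have := Rl (ginv s) (Hsq s Hs). rewrite mulg1 mulKg. exact: Rsym.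
Qed.
End Reps.

Section OddOrder.
Variable G : AGroup.
Hypothesis Gab : abelian_group G.

Definition prod (l : list G) := fold_right gmul gone l.
Fixpoint pow (y : G) (n : nat) : G := match n with O => gone | S n => y ⋅ pow y n end.

Lemma prod_perm l l' : Permutation.Permutation l l' -> prod l = prod l'.
Proof.
  elim => //= [x l1 l2 _ -> | x y l0 | l1 l2 l3 _ -> _ ->] //.
  by rewrite !gmulA (Gab x y).
Qed.

Lemma prod_map y l : prod (map (gmul y) l) = pow y (length l) ⋅ prod l.
Proof.
  elim: l => [|z l IH] /=; first by rewrite gmul1.
  rewrite IH. rewrite !gmulA. congr (_ ⋅ _). rewrite -!gmulA. congr (_ ⋅ _). exact: Gab.
Qed.

Lemma pow_full y (l : list G) : NoDup l -> (forall x, In x l) -> pow y (length l) = gone.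
Proof.
  move=> Hnd Hall.
  have Hp : Permutation.Permutation l (map (gmul y) l).
    apply: Permutation.NoDup_Permutation => //.
    - apply: FinFun.Injective_map_NoDup => // a b; exact: mulg_canl.
    - move=> x; split=> _; last exact: Hall. apply/in_map_iff. exists (ginv y ⋅ x); split.
      exact: mulKVg. exact: Hall.
  have := @prod_perm _ _ Hp. rewrite prod_map. rewrite -{1}(gmul1 (prod l)).
  move=> E. symmetry. apply: (@mulg_canl _ (prod l)).
  by rewrite (Gab (prod l) gone) E (Gab (pow y _)).
Qed.

Lemma pow_add (y : G) m n : pow y (m + n) = pow y m ⋅ pow y n.
Proof. elim: m => [|m IH] /=; [by rewrite gmul1 | by rewrite IH gmulA]. Qed.

Lemma odd_sq (y : G) : odd_order_group G -> exists z, y = z ⋅ z.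
Proof.
  move=> [l [Hnd [Hall Hodd]]].
  have := @pow_full y l Hnd Hall.
  have [m Hm] : exists m, length l = (2 * m + 1)%coq_nat.
    by apply/PeanoNat.Nat.odd_spec.
  rewrite Hm => E. exists (pow y m.+1). rewrite -pow_add.
  have -> : (m.+1 + m.+1 = (2 * m + 1)%coq_nat.+1)%N by lia.
  by rewrite /= E mulg1.
Qed.
End OddOrder.

Section GP.
Variables (V : finType) (e : rel V) (Gv : V -> AGroup) (G : AGroup)
  (iota : forall v, Gv v -> G).
Hypothesis hG : is_graph_product e Gv G iota.
Hypothesis hab : forall v, abelian_group (Gv v).

Lemma inner_aut (a : G) : is_aut (fun g => a ⋅ g ⋅ ginv a).
Proof.
  split.
  - move=> x y /=. by rewrite !gmulA mulgKV.
  - exists (fun g => ginv a ⋅ g ⋅ ginv (ginv a)); split => x; rewrite invgK.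
    + by rewrite !gmulA gmulV gmul1 mulgKV.
    + by rewrite !gmulA mulgV gmul1 mulgK.
Qed.

Lemma K_comm (a g : G) : aut_comm G (a ⋅ g ⋅ ginv a ⋅ ginv g).
Proof.
  apply: genS. exists (fun g => a ⋅ g ⋅ ginv a), g; split; first exact: inner_aut.
  done.
Qed.

Lemma theta_ex : exists th : G -> G, is_aut th /\ forall v x, th (iota v x) = iota v (ginv x).
Proof.
  case: hG => [Hhom [Hcomm Huniv]].
  have H1 : forall w, is_hom (fun x : Gv w => iota w (ginv x)).
    move=> w x y /=. rewrite -Hhom invgM. congr (iota w _). exact: hab.
  have H2 : forall v w, e v w -> forall (x : Gv v) (y : Gv w),
      iota v (ginv x) ⋅ iota w (ginv y) = iota w (ginv y) ⋅ iota v (ginv x).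
    move=> v w Hvw x y. exact: Hcomm.
  have [th [[Hth Hthi] _]] := Huniv G (fun w x => iota w (ginv x)) H1 H2.
  have [phi0 [_ Hu]] := Huniv G iota Hhom Hcomm.
  exists th; split => //; split => //.
  exists th.
  have H : forall x, th (th x) = x.
    move=> x.
    have A1 : is_hom (fun g => th (th g)) by move=> a b /=; rewrite !Hth.
    have A2 : forall v (x0 : Gv v), th (th (iota v x0)) = iota v x0.
      by move=> v x0; rewrite !Hthi invgK.
    have E1 := Hu (fun g => th (th g)) A1 A2.
    have E2 := Hu (fun g => g) (fun a b => erefl) (fun v x0 => erefl).
    by move: (E1 x) (E2 x) => /= -> ->.
  by split.
Qed.

Lemma K_sq v (x : Gv v) : aut_comm G (iota v x ⋅ iota v x).
Proof.
  have [th [Hth Hthi]] := theta_ex.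
  have H : aut_comm G (th (iota v x) ⋅ ginv (iota v x)).
    apply: genS. exists th, (iota v x); by split.
  case: hG => [Hhom _].
  move: (genV H). rewrite Hthi (homV (Hhom v)) invgM !invgK. done.
Qed.

Definition Tg := fun h : G => exists v x, h = iota v x.

Lemma sub_inj (a b : {g : G | generated Tg g}) : proj1_sig a = proj1_sig b -> a = b.
Proof.
  case: a b => [a Ha] [b Hb] /= E. subst. f_equal. apply: proof_irrelevance.
Qed.

Definition SubG : AGroup.
Proof.
  refine {| carrier := {g : G | generated Tg g};
            gmul := fun a b => exist _ (proj1_sig a ⋅ proj1_sig b) (genM (proj2_sig a) (proj2_sig b));
            ginv := fun a => exist _ (ginv (proj1_sig a)) (genV (proj2_sig a));
            gone := exist _ gone (gen1) |}.
  - move=> x y z; apply: sub_inj => /=. exact: gmulA.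
  - move=> x; apply: sub_inj => /=. exact: gmul1.
  - move=> x; apply: sub_inj => /=. exact: gmulV.
Defined.

Lemma gen_all g : generated Tg g.
Proof.
  case: hG => [Hhom [Hcomm Huniv]].
  pose f := fun w (x : Gv w) => (exist _ (iota w x) (genS (ex_intro _ w (ex_intro _ x erefl))) : SubG).
  have H1 : forall w, is_hom (f w).
    move=> w x y. apply: sub_inj => /=. exact: Hhom.
  have H2 : forall v w, e v w -> forall (x : Gv v) (y : Gv w),
      gmul (f v x) (f w y) = gmul (f w y) (f v x).
    move=> v w Hvw x y. apply: sub_inj => /=. exact: Hcomm.
  have [phi [[Hphi Hphii] _]] := Huniv SubG f H1 H2.
  have [phi0 [_ Hu]] := Huniv G iota Hhom Hcomm.
  have E : proj1_sig (phi g) = g.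
    have A1 : is_hom (fun g => proj1_sig (phi g)) by move=> a b /=; rewrite Hphi.
    have A2 : forall v (x0 : Gv v), proj1_sig (phi (iota v x0)) = iota v x0.
      by move=> v x0; rewrite Hphii.
    have E1 := Hu (fun g => proj1_sig (phi g)) A1 A2.
    have E2 := Hu (fun g => g) (fun a b => erefl) (fun v x0 => erefl).
    by move: (E1 g) (E2 g) => /= -> ->.
  rewrite -E. exact: proj2_sig (phi g).
Qed.

Hypothesis hfg : forall v, finitely_generated (Gv v).

Lemma list_gen_seq (s : seq V) : exists L : list G,
  (forall a, In a L -> Tg a) /\ forall v, v \in s -> forall x, generated (fun y => In y L) (iota v x).
Proof.
  case: hG => [Hhom _].
  elim: s => [|v s [L [HL1 HL2]]].
    by exists nil; split.
  have [lv Hlv] := hfg v.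
  exists (map (iota v) lv ++ L); split.
  - move=> a Ha. case: (in_app_or _ _ _ Ha) => {}Ha; last exact: HL1.
    case: (proj1 (in_map_iff _ _ _) Ha) => z [<- _]. by exists v, z.
  - move=> w; rewrite inE => /orP [/eqP -> | Hw] x.
    + have := hom_gen (Hhom v) (Hlv x). apply: gen_sub => y [z [Hz ->]].
      apply: genS; apply: in_or_app; left; exact: in_map.
    + apply: gen_sub (HL2 w Hw x) => y Hy. apply: genS; apply: in_or_app; by right.
Qed.

Lemma list_gen : exists L : list G,
  (forall a, In a L -> Tg a) /\ forall g, generated (fun y => In y L) g.
Proof.
  have [L [HL1 HL2]] := list_gen_seq (enum V).
  exists L; split => // g. apply: gen_sub (gen_all g) => y [v [x ->]].
  apply: HL2. by rewrite mem_enum.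
Qed.

End GP.

Theorem proposition8p3 (V : finType) (e : rel V)
  (e_sym : forall x y : V, e x y = e y x) (e_irr : forall x : V, e x x = false) (V_ne : 0 < #|V|)
  (Gv : V -> AGroup) (G : AGroup) (iota : forall v, Gv v -> G)
  (hG : is_graph_product e Gv G iota)
  (hab : forall v, abelian_group (Gv v))
  (hfg : forall v, finitely_generated (Gv v))
  (hnt : forall v, nontrivial_group (Gv v))
  (hcent : forall v, star_is_all e v -> finite_group (Gv v)) :
  finite_index (aut_comm G) /\
  ((forall v, ~ star_is_all e v) -> (forall v, odd_order_group (Gv v)) ->
     forall g : G, aut_comm G g).
Proof.
  split.
  - have [L [HL1 HL2]] := @list_gen _ _ _ _ _ hG hfg.
    pose R := fun x y : G => aut_comm G (ginv x ⋅ y).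
    have Rrefl : forall x, R x x by move=> x; rewrite /R gmulV; exact: gen1.
    have Rsym : forall x y, R x y -> R y x.
      move=> x y H. have := genV H. by rewrite invgM invgK.
    have Rtrans : forall x y z, R x y -> R y z -> R x z.
      move=> x y z H1 H2. have := genM H1 H2. by rewrite -gmulA mulKVg.
    have Rl : forall z x y, R x y -> R (z ⋅ x) (z ⋅ y).
      move=> z x y H. by rewrite /R invgM -gmulA mulKg.
    have Rr : forall z x y, R x y -> R (x ⋅ z) (y ⋅ z).
      move=> z x y H. rewrite /R.
      set k := ginv x ⋅ y in H.
      have -> : ginv (x ⋅ z) ⋅ (y ⋅ z) = k ⋅ (ginv k ⋅ ginv z ⋅ ginv (ginv k) ⋅ ginv (ginv z)).
        by rewrite !invgK !gmulA mulgV gmul1 /k invgM.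
      apply: (genM H). exact: K_comm.
    have Rc : forall x y, R (x ⋅ y) (y ⋅ x).
      move=> x y. rewrite /R.
      have := K_comm _ (ginv y) (ginv x). by rewrite !invgK invgM !gmulA.
    have Hsq : forall b, In b L -> R gone (b ⋅ b).
      move=> b /HL1 [v [x ->]]. rewrite /R inv1 gmul1. exact: (@K_sq _ _ _ _ _ hG hab).
    exists (reps _ L) => g.
    exact: (@reps_main _ R Rrefl Rsym Rtrans Rl Rr Rc L Hsq g (HL2 g)).
  - move=> _ Hodd g.
    have [Hhom _] := hG.
    rewrite /aut_comm. apply: gen_sub (@gen_all _ _ _ _ _ hG g) => y [v [x ->]].
    have [z ->] := @odd_sq _ (hab v) x (Hodd v).
    rewrite Hhom. exact: (@K_sq _ _ _ _ _ hG hab).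
Qed.
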